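(* For every $n\in\mathbb N$ and every $\alpha\in(0,1)$ there exists $N\in\mathbb N$ such that the following holds: if $(X,d)$ is a metric space of cardinality at least $N$, then the metric space $(X,d^\alpha)$ does not admit an isometric embedding into any $n$-dimensional normed linear space.
   Context: For a metric space $(X,d)$ and $\alpha\in(0,1)$, $d^\alpha$ denotes the metric $(x,y)\mapsto d(x,y)^\alpha$; $(X,d^\alpha)$ is called the $\alpha$-snowflake of $(X,d)$. *)

(* Defs.v *)
From Stdlib Require Import Reals.
Open Scope R_scope.

Definition is_metric (X : Type) (d : X -> X -> R) : Prop :=
  (forall x y, 0 <= d x y) /\
  (forall x y, d x y = 0 <-> x = y) /\
  (forall x y, d x y = d y x) /\
  (forall x y z, d x z <= d x y + d y z).

(* t^a for t >= 0 (with 0^a = 0, as a > 0); Stdlib's Rpower is only meaningful for t > 0. *)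
Definition rpow_nn (t a : R) : R :=
  if Rle_dec t 0 then 0 else Rpower t a.

Definition snowflake (X : Type) (d : X -> X -> R) (alpha : R) : X -> X -> R :=
  fun x y => rpow_nn (d x y) alpha.

Definition card_ge (X : Type) (N : nat) : Prop :=
  exists f : nat -> X, forall i j, (i < N)%nat -> (j < N)%nat -> f i = f j -> i = j.

Definition is_normed_space (V : Type) (add : V -> V -> V) (scal : R -> V -> V)
  (zero : V) (opp : V -> V) (norm : V -> R) : Prop :=
  (forall u v w, add u (add v w) = add (add u v) w) /\
  (forall u v, add u v = add v u) /\
  (forall u, add u zero = u) /\
  (forall u, add u (opp u) = zero) /\
  (forall a b u, scal a (scal b u) = scal (a * b) u) /\
  (forall u, scal 1 u = u) /\
  (forall a u v, scal a (add u v) = add (scal a u) (scal a v)) /\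
  (forall a b u, scal (a + b) u = add (scal a u) (scal b u)) /\
  (forall u, 0 <= norm u) /\
  (forall u, norm u = 0 -> u = zero) /\
  (forall a u, norm (scal a u) = Rabs a * norm u) /\
  (forall u v, norm (add u v) <= norm u + norm v).

Fixpoint lin_comb (V : Type) (add : V -> V -> V) (scal : R -> V -> V) (zero : V)
  (e : nat -> V) (c : nat -> R) (k : nat) : V :=
  match k with
  | O => zero
  | S k' => add (lin_comb V add scal zero e c k') (scal (c k') (e k'))
  end.

Definition has_dim (V : Type) (add : V -> V -> V) (scal : R -> V -> V) (zero : V)
  (n : nat) : Prop :=
  exists e : nat -> V,
    (forall v, exists c : nat -> R, v = lin_comb V add scal zero e c n) /\
    (forall c : nat -> R, lin_comb V add scal zero e c n = zero ->
       forall i, (i < n)%nat -> c i = 0).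

Definition isometric_embedding (X V : Type) (d' : X -> X -> R)
  (add : V -> V -> V) (opp : V -> V) (norm : V -> R) (f : X -> V) : Prop :=
  forall x y, norm (add (f x) (opp (f y))) = d' x y.

(* Main.v *)
Require Import Defs.
From Stdlib Require Import Reals Lra Lia List ZArith PeanoNat Classical ClassicalEpsilon.
From Coquelicot Require Import Compactness.
Import ListNotations.
Open Scope nat_scope.

Lemma filter_len_split {A} (f : A -> bool) (l : list A) :
  length (filter f l) + length (filter (fun x => negb (f x)) l) = length l.
Proof. induction l; simpl; auto. destruct (f a); simpl; lia. Qed.

Lemma tourn {C : Type} (col : nat -> nat -> C) : forall (L : list C) (vs : list nat),
  NoDup vs -> (forall i j, In i vs -> In j vs -> i < j -> In (col i j) L) ->
  2 ^ length L < length vs ->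
  exists i j k, In i vs /\ In j vs /\ In k vs /\ i < j /\ j < k /\ col i j = col j k.
Proof.
  induction L as [|c0 L IH]; intros vs Hnd Hcol Hlen.
  - simpl in Hlen. destruct vs as [|a [|b vs']]; simpl in Hlen; try lia.
    inversion Hnd; subst. exfalso. assert (a <> b) by (intro; subst; apply H1; left; auto).
    destruct (Nat.lt_ge_cases a b).
    + apply (Hcol a b); simpl; auto.
    + apply (Hcol b a); simpl; auto. lia.
  - set (P := fun v => exists u, In u vs /\ u < v /\ col u v = c0).
    set (dec := fun v => if excluded_middle_informative (P v) then true else false).
    assert (Hdec : forall v, dec v = true <-> P v).
    { intros v. unfold dec. destruct (excluded_middle_informative (P v)); split; auto; discriminate. }
    pose proof (filter_len_split dec vs) as Hs.
    simpl in Hlen.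
    destruct (Nat.lt_ge_cases (2 ^ length L) (length (filter (fun x => negb (dec x)) vs))) as [HA|HA].
    + destruct (IH (filter (fun x => negb (dec x)) vs)) as [i [j [k [Hi [Hj [Hk Hr]]]]]]; auto.
      * apply NoDup_filter; auto.
      * intros i j Hi Hj Hij. apply filter_In in Hi, Hj. destruct Hi as [Hi _]. destruct Hj as [Hj Hj'].
        destruct (Hcol i j Hi Hj Hij) as [E|E]; auto. exfalso.
        assert (P j) by (exists i; auto). apply Hdec in H. rewrite H in Hj'. discriminate.
      * apply filter_In in Hi, Hj, Hk. exists i, j, k. intuition.
    + assert (HB : 2 ^ length L < length (filter dec vs)) by lia.
      destruct (classic (exists i j, In i (filter dec vs) /\ In j (filter dec vs) /\ i < j /\ col i j = c0))
        as [[i [j [Hi [Hj [Hij Hc]]]]]|Hno].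
      * apply filter_In in Hi, Hj. destruct Hi as [Hi Hi']. apply Hdec in Hi'.
        destruct Hi' as [u [Hu [Hui Huc]]]. exists u, i, j. intuition. congruence.
      * destruct (IH (filter dec vs)) as [i [j [k [Hi [Hj [Hk Hr]]]]]]; auto.
        -- apply NoDup_filter; auto.
        -- intros i j Hi Hj Hij. pose proof Hi as Hi0. pose proof Hj as Hj0.
           apply filter_In in Hi, Hj.
           destruct (Hcol i j (proj1 Hi) (proj1 Hj) Hij) as [E|E]; auto. exfalso.
           apply Hno. exists i, j. auto.
        -- apply filter_In in Hi, Hj, Hk. exists i, j, k. intuition.
Qed.

Open Scope R_scope.

Section NS.
Context {V : Type} (add : V -> V -> V) (scal : R -> V -> V) (zero : V)
  (opp : V -> V) (norm : V -> R).
Context (HN : is_normed_space V add scal zero opp norm).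

Lemma ax_assoc : forall u v w, add u (add v w) = add (add u v) w.
Proof. apply HN. Qed.
Lemma ax_comm : forall u v, add u v = add v u.
Proof. apply HN. Qed.
Lemma ax_0r : forall u, add u zero = u.
Proof. apply HN. Qed.
Lemma ax_oppr : forall u, add u (opp u) = zero.
Proof. apply HN. Qed.
Lemma ax_scal_scal : forall a b u, scal a (scal b u) = scal (a * b) u.
Proof. apply HN. Qed.
Lemma ax_scal1 : forall u, scal 1 u = u.
Proof. apply HN. Qed.
Lemma ax_scal_addv : forall a u v, scal a (add u v) = add (scal a u) (scal a v).
Proof. apply HN. Qed.
Lemma ax_scal_addr : forall a b u, scal (a + b) u = add (scal a u) (scal b u).
Proof. apply HN. Qed.
Lemma ax_norm_ge0 : forall u, 0 <= norm u.
Proof. apply HN. Qed.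
Lemma ax_norm_eq0 : forall u, norm u = 0 -> u = zero.
Proof. apply HN. Qed.
Lemma ax_norm_scal : forall a u, norm (scal a u) = Rabs a * norm u.
Proof. apply HN. Qed.
Lemma ax_norm_tri : forall u v, norm (add u v) <= norm u + norm v.
Proof. apply HN. Qed.

Lemma add_cancel : forall u v w, add u v = add u w -> v = w.
Proof.
  intros u v w H.
  assert (add (opp u) (add u v) = add (opp u) (add u w)) by (rewrite H; reflexivity).
  rewrite !ax_assoc, (ax_comm (opp u) u), ax_oppr, !(ax_comm zero), !ax_0r in H0.
  exact H0.
Qed.

Lemma scal_0 : forall u, scal 0 u = zero.
Proof.
  intros u. apply (add_cancel (scal 0 u)).
  rewrite <- ax_scal_addr, Rplus_0_r, ax_0r. reflexivity.
Qed.

Lemma opp_scal : forall u, opp u = scal (-1) u.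
Proof.
  intros u. apply (add_cancel u).
  rewrite ax_oppr. rewrite <- (ax_scal1 u) at 1.
  rewrite <- ax_scal_addr. replace (1 + -1) with 0 by ring. rewrite scal_0. reflexivity.
Qed.

Notation LC e c k := (lin_comb V add scal zero e c k).

Lemma LC_ext : forall e c c' k, (forall i, (i < k)%nat -> c i = c' i) -> LC e c k = LC e c' k.
Proof.
  intros e c c' k; induction k; intros H; simpl; auto.
  rewrite IHk by (intros; apply H; lia). rewrite H by lia. reflexivity.
Qed.

Lemma LC_plus : forall e c c' k, LC e (fun i => c i + c' i) k = add (LC e c k) (LC e c' k).
Proof.
  intros e c c' k; induction k; simpl.
  - rewrite ax_0r; reflexivity.
  - rewrite IHk, ax_scal_addr.
    rewrite <- !ax_assoc. f_equal.
    rewrite (ax_comm (LC e c' k)). rewrite <- !ax_assoc. f_equal.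
    apply ax_comm.
Qed.

Lemma scal_zero : forall a, scal a zero = zero.
Proof.
  intros a. rewrite <- (scal_0 zero), ax_scal_scal, Rmult_0_r. reflexivity.
Qed.

Lemma LC_scal : forall e c a k, LC e (fun i => a * c i) k = scal a (LC e c k).
Proof.
  intros e c a k; induction k; simpl.
  - rewrite scal_zero; reflexivity.
  - rewrite IHk, ax_scal_addv, ax_scal_scal. reflexivity.
Qed.

Lemma LC_sub : forall e c c' k, LC e (fun i => c i - c' i) k = add (LC e c k) (opp (LC e c' k)).
Proof.
  intros. rewrite opp_scal, <- LC_scal, <- LC_plus. apply LC_ext. intros; ring.
Qed.

Lemma norm_zero : norm zero = 0.
Proof. rewrite <- (scal_0 zero), ax_norm_scal, Rabs_R0. ring. Qed.

Fixpoint wsum (e : nat -> V) (c : nat -> R) (k : nat) : R :=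
  match k with O => 0 | S k' => wsum e c k' + Rabs (c k') * norm (e k') end.

Lemma LC_bound : forall e c k, norm (LC e c k) <= wsum e c k.
Proof.
  intros e c k; induction k; simpl.
  - rewrite norm_zero; lra.
  - eapply Rle_trans. apply ax_norm_tri. rewrite ax_norm_scal. lra.
Qed.

End NS.


Fixpoint tofun (n : nat) : Tn n R -> nat -> R :=
  match n return Tn n R -> nat -> R with
  | O => fun _ _ => 0
  | S n' => fun x j => match j with O => fst x | S j' => tofun n' (snd x) j' end
  end.

Fixpoint offun (n : nat) (c : nat -> R) : Tn n R :=
  match n return Tn n R with
  | O => tt
  | S n' => (c O, offun n' (fun j => c (S j)))
  end.

Fixpoint cst (n : nat) (r : R) : Tn n R :=
  match n return Tn n R with
  | O => tt
  | S n' => (r, cst n' r)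
  end.

Lemma tofun_offun : forall n c j, (j < n)%nat -> tofun n (offun n c) j = c j.
Proof.
  induction n; intros c j Hj; [lia|].
  destruct j; simpl; auto. apply (IHn (fun j => c (S j))). lia.
Qed.

Lemma bounded_offun : forall n c, (forall j, (j < n)%nat -> -1 <= c j <= 1) ->
  bounded_n n (cst n (-1)) (cst n 1) (offun n c).
Proof.
  induction n; intros c H; simpl; auto.
  split. apply H; lia. apply IHn. intros; apply H; lia.
Qed.

Lemma close_tofun : forall n d x t, close_n n d x t ->
  forall j, (j < n)%nat -> Rabs (tofun n x j - tofun n t j) < d.
Proof.
  induction n; intros d x t H j Hj; [lia|].
  destruct x as [x1 x2], t as [t1 t2]. simpl in H. destruct H as [H1 H2].
  destruct j; simpl; auto. apply IHn; auto; lia.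
Qed.


Fixpoint mx (c : nat -> R) (k : nat) : R :=
  match k with O => 0 | S k' => Rmax (mx c k') (Rabs (c k')) end.

Lemma mx_ge : forall c k j, (j < k)%nat -> Rabs (c j) <= mx c k.
Proof.
  intros c k; induction k; intros j Hj; [lia|]. simpl.
  destruct (Nat.eq_dec j k). subst. apply Rmax_r.
  eapply Rle_trans. apply IHk; lia. apply Rmax_l.
Qed.

Lemma mx_ge0 : forall c k, 0 <= mx c k.
Proof. intros c k; induction k; simpl. lra. eapply Rle_trans. apply IHk. apply Rmax_l. Qed.

Lemma mx_attained : forall c k, mx c k = 0 \/ exists j, (j < k)%nat /\ Rabs (c j) = mx c k.
Proof.
  intros c k; induction k; simpl; auto.
  unfold Rmax. destruct (Rle_dec (mx c k) (Rabs (c k))).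
  - right. exists k. split; auto.
  - destruct IHk as [H|[j [Hj H]]]. left; auto. right. exists j; split; auto.
Qed.

Lemma abs_le_inv : forall x r, Rabs x <= r -> -r <= x <= r.
Proof. intros x r. unfold Rabs; destruct (Rcase_abs x); intros; lra. Qed.

Section NS2.
Context {V : Type} (add : V -> V -> V) (scal : R -> V -> V) (zero : V)
  (opp : V -> V) (norm : V -> R).
Context (HN : is_normed_space V add scal zero opp norm).
Context (n : nat) (e : nat -> V).
Context (Hind : forall c : nat -> R, lin_comb V add scal zero e c n = zero ->
       forall i, (i < n)%nat -> c i = 0).

Definition NN (c : nat -> R) : R := norm (lin_comb V add scal zero e c n).

Lemma NN_ge0 : forall c, 0 <= NN c.
Proof. intros; apply (ax_norm_ge0 _ _ _ _ _ HN). Qed.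

Lemma NN_ext : forall c c', (forall i, (i < n)%nat -> c i = c' i) -> NN c = NN c'.
Proof. intros. unfold NN. f_equal. apply LC_ext; auto. Qed.

Lemma NN_tri : forall c c', NN (fun i => c i + c' i) <= NN c + NN c'.
Proof. intros. unfold NN. rewrite (LC_plus _ _ _ _ _ HN). apply (ax_norm_tri _ _ _ _ _ HN). Qed.

Lemma NN_scal : forall a c, NN (fun i => a * c i) = Rabs a * NN c.
Proof. intros. unfold NN. rewrite (LC_scal _ _ _ _ _ HN). apply (ax_norm_scal _ _ _ _ _ HN). Qed.

Lemma NN_eq0 : forall c, NN c = 0 -> forall i, (i < n)%nat -> c i = 0.
Proof. intros c H. apply Hind. apply (ax_norm_eq0 _ _ _ _ _ HN). exact H. Qed.

Lemma NN_sub_sym : forall c c', NN (fun i => c i - c' i) = NN (fun i => c' i - c i).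
Proof.
  intros. rewrite <- (Rmult_1_l (NN (fun i => c' i - c i))).
  rewrite <- Rabs_R1. rewrite <- (Rabs_Ropp 1), <- NN_scal. apply NN_ext. intros; ring.
Qed.

Lemma NN_rev : forall c c', NN c' - NN (fun i => c' i - c i) <= NN c.
Proof.
  intros. assert (NN c' <= NN c + NN (fun i => c' i - c i)).
  { rewrite <- (NN_ext (fun i => c i + (c' i - c i))) by (intros; ring). apply NN_tri. }
  lra.
Qed.

Lemma wsum_le : forall c M k, (forall i, (i < k)%nat -> Rabs (c i) <= M) ->
  wsum norm e c k <= M * wsum norm e (fun _ => 1) k.
Proof.
  intros c M k; induction k; intros H; simpl. lra.
  rewrite Rabs_R1. rewrite Rmult_plus_distr_l.
  apply Rplus_le_compat. apply IHk; intros; apply H; lia.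
  rewrite Rmult_1_l. apply Rmult_le_compat_r. apply (ax_norm_ge0 _ _ _ _ _ HN). apply H; lia.
Qed.

Lemma NN_bound : forall c M, (forall i, (i < n)%nat -> Rabs (c i) <= M) ->
  NN c <= M * wsum norm e (fun _ => 1) n.
Proof.
  intros. eapply Rle_trans. apply (LC_bound _ _ _ _ _ HN). apply wsum_le; auto.
Qed.

Lemma wsum_ge0 : forall c k, 0 <= wsum norm e c k.
Proof.
  intros c k; induction k; simpl. lra.
  pose proof (ax_norm_ge0 _ _ _ _ _ HN (e k)). pose proof (Rabs_pos (c k)). nra.
Qed.

Definition CC := 1 + wsum norm e (fun _ => 1) n.
Lemma CC_pos : 0 < CC.
Proof. unfold CC. pose proof (wsum_ge0 (fun _ => 1) n). lra. Qed.

Definition gauge (t : Tn n R) : RIneq.posreal.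
Proof.
  destruct (Rlt_dec 0 (NN (tofun n t))) as [H|H].
  - exists (NN (tofun n t) / (2 * CC)). pose proof CC_pos.
    apply Rdiv_lt_0_compat; lra.
  - exists (1/2). lra.
Defined.

Lemma nonuniform : exists K, 0 < K /\ forall c j, (j < n)%nat -> Rabs (c j) <= K * NN c.
Proof.
  destruct (compactness_value n (cst n (-1)) (cst n 1) gauge) as [d Hd].
  assert (claim : forall x, (forall j, (j < n)%nat -> Rabs (x j) <= 1) ->
      (exists j, (j < n)%nat /\ Rabs (x j) = 1) -> CC * d <= NN x).
  { intros x Hx [j0 [Hj0 Hx0]].
    destruct (Rle_lt_dec (CC * d) (NN x)) as [ok|bad]; auto. exfalso.
    refine (Hd (offun n x) _ _).
    { apply bounded_offun. intros j Hj. specialize (Hx j Hj). apply abs_le_inv in Hx. lra. }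
    intros [t [_ [Hcl Hdt]]].
    pose proof (close_tofun _ _ _ _ Hcl) as Hc.
    assert (Hc' : forall j, (j < n)%nat -> Rabs (x j - tofun n t j) < gauge t).
    { intros j Hj. rewrite <- (tofun_offun n x j Hj). apply Hc; auto. }
    clear Hc Hcl.
    pose proof CC_pos as HC.
    unfold gauge in *. destruct (Rlt_dec 0 (NN (tofun n t))) as [Hp|Hp]; simpl in *.
    - set (ct := tofun n t) in *.
      assert (H1 : NN (fun i => ct i - x i) <= (NN ct / (2 * CC)) * wsum norm e (fun _ => 1) n).
      { apply NN_bound. intros i Hi. rewrite Rabs_minus_sym. left. apply Hc'; auto. }
      pose proof (NN_rev x ct).
      assert (wsum norm e (fun _ => 1) n < CC) by (unfold CC; lra).
      assert (NN ct / (2 * CC) * wsum norm e (fun _ => 1) n <= NN ct / 2).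
      { unfold Rdiv. rewrite Rinv_mult.
        replace (NN ct * (/ 2 * / CC) * wsum norm e (fun _ : nat => 1) n)
          with (NN ct / 2 * (wsum norm e (fun _ : nat => 1) n / CC)) by (field; lra).
        assert (wsum norm e (fun _ : nat => 1) n / CC <= 1).
        { unfold Rdiv; apply Rle_trans with (CC * / CC); [apply Rmult_le_compat_r; [left; apply Rinv_0_lt_compat|]; lra | right; apply Rinv_r; lra]. }
        assert (0 <= NN ct / 2) by lra. nra. }
      assert (Hq : CC * d <= CC * (NN ct / (2 * CC))) by (apply Rmult_le_compat_l; lra).
      replace (CC * (NN ct / (2 * CC))) with (NN ct / 2) in Hq by (field; lra).
      lra.
    - assert (NN (tofun n t) = 0) by (pose proof (NN_ge0 (tofun n t)); lra).
      pose proof (NN_eq0 _ H j0 Hj0). specialize (Hc' j0 Hj0). rewrite H0, Rminus_0_r in Hc'.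
      lra. }
  exists (/ (CC * d)). split.
  { apply Rinv_0_lt_compat. apply Rmult_lt_0_compat. apply CC_pos. apply cond_pos. }
  intros c j Hj.
  set (M := mx c n).
  assert (HK : 0 < / (CC * d)).
  { apply Rinv_0_lt_compat. apply Rmult_lt_0_compat. apply CC_pos. apply cond_pos. }
  pose proof (mx_ge c n j Hj) as Hcj. fold M in Hcj.
  destruct (Req_dec M 0) as [E|E].
  - rewrite E in Hcj. pose proof (NN_ge0 c). nra.
  - assert (HMp : 0 < M) by (pose proof (mx_ge0 c n); fold M in H; lra).
    destruct (mx_attained c n) as [H0|[j0 [Hj0 HM]]]. { fold M in H0; lra. } fold M in HM.
    assert (Hx := claim (fun i => / M * c i)).
    rewrite NN_scal in Hx. rewrite Rabs_right in Hx by (left; apply Rinv_0_lt_compat; lra).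
    assert (CC * d <= / M * NN c).
    { apply Hx.
      - intros i Hi. rewrite Rabs_mult, Rabs_right by (left; apply Rinv_0_lt_compat; lra).
        pose proof (mx_ge c n i Hi). fold M in H. apply (Rmult_le_reg_l M); auto.
        field_simplify; lra.
      - exists j0. split; auto. rewrite Rabs_mult, Rabs_right by (left; apply Rinv_0_lt_compat; lra).
        rewrite HM. field; lra. }
    pose proof CC_pos. pose proof (cond_pos d).
    assert (M * (CC * d) <= NN c).
    { apply (Rmult_le_compat_l M) in H; [|lra]. replace (M * (/ M * NN c)) with (NN c) in H by (field; lra). lra. }
    assert (M <= / (CC * d) * NN c).
    { apply (Rmult_le_reg_l (CC * d)). nra. replace (CC * d * (/ (CC * d) * NN c)) with (NN c) by (field; lra). lra. }
    lra.
Qed.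

Definition supp (k : nat) (h : nat -> R) : Prop := forall i, (k <= i)%nat -> h i = 0.
Definition Ek (k : nat) : nat -> R := fun i => if Nat.eq_dec i k then 1 else 0.

Lemma omega_exists : forall k, (k < n)%nat -> exists w : nat -> R,
  (forall i, (k < i)%nat -> w i = 0) /\ w k <> 0 /\ NN w = 1 /\
  forall h, supp k h -> 1/2 <= NN (fun i => w i - h i).
Proof.
  intros k Hk.
  destruct nonuniform as [K [HK HKb]].
  assert (Hlow : forall h, supp k h -> / K <= NN (fun i => Ek k i - h i)).
  { intros h Hh. pose proof (HKb (fun i => Ek k i - h i) k Hk) as H. simpl in H.
    assert (E1 : Ek k k - h k = 1).
    { unfold Ek. destruct (Nat.eq_dec k k) as [_|C]; [|congruence]. rewrite (Hh k (le_n k)). ring. }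
    rewrite E1, Rabs_R1 in H.
    apply (Rmult_le_reg_l K); auto. rewrite Rinv_r by lra. lra. }
  set (E := fun r => exists h, supp k h /\ r = - NN (fun i => Ek k i - h i)).
  assert (Hb : bound E). { exists 0. intros r [h [_ ->]]. pose proof (NN_ge0 (fun i => Ek k i - h i)). lra. }
  assert (Hne : exists r, E r). { exists (- NN (fun i => Ek k i - 0)). exists (fun _ => 0). split; auto. intros i _; auto. }
  destruct (completeness E Hb Hne) as [m [Hub Hlub]].
  assert (Hm1 : m <= - / K).
  { apply Hlub. intros r [h [Hh ->]]. pose proof (Hlow h Hh). lra. }
  assert (Hd : forall h, supp k h -> - m <= NN (fun i => Ek k i - h i)).
  { intros h Hh. assert (E (- NN (fun i => Ek k i - h i))) by (exists h; auto). apply Hub in H. lra. }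
  assert (Hex : exists h0, supp k h0 /\ NN (fun i => Ek k i - h0 i) < 2 * (- m)).
  { apply NNPP. intros Hn.
    assert (m <= 2 * m).
    { apply Hlub. intros r [h [Hh ->]].
      destruct (Rlt_le_dec (NN (fun i => Ek k i - h i)) (2 * - m)) as [Hl|Hl].
      - exfalso. apply Hn. exists h. auto.
      - lra. }
    pose proof (Rinv_0_lt_compat K HK). lra. }
  destruct Hex as [h0 [Hh0 Hh0b]].
  set (m0 := NN (fun i => Ek k i - h0 i)) in *.
  assert (Hm0 : 0 < m0). { pose proof (Hlow h0 Hh0). pose proof (Rinv_0_lt_compat K HK). fold m0 in H. lra. }
  exists (fun i => / m0 * (Ek k i - h0 i)). split; [|split; [|split]].
  - intros i Hi. rewrite (Hh0 i) by lia. unfold Ek. destruct (Nat.eq_dec i k); [lia|]. ring.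
  - rewrite (Hh0 k) by lia. unfold Ek. destruct (Nat.eq_dec k k); [|congruence].
    rewrite Rminus_0_r, Rmult_1_r. apply Rinv_neq_0_compat. lra.
  - rewrite NN_scal. fold m0. rewrite Rabs_right by (left; apply Rinv_0_lt_compat; lra).
    field. lra.
  - intros h Hh.
    rewrite (NN_ext _ (fun i => / m0 * (Ek k i - (h0 i + m0 * h i)))) by (intros; field; lra).
    rewrite NN_scal. rewrite Rabs_right by (left; apply Rinv_0_lt_compat; lra).
    assert (Hs : supp k (fun i => h0 i + m0 * h i)).
    { intros i Hi. rewrite Hh0, Hh by auto. ring. }
    pose proof (Hd _ Hs).
    apply (Rmult_le_reg_l m0); auto. rewrite <- Rmult_assoc, Rinv_r, Rmult_1_l by lra. lra.
Qed.


Fixpoint lcf (w : nat -> nat -> R) (t : nat -> R) (k : nat) (i : nat) : R :=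
  match k with O => 0 | S k' => lcf w t k' i + t k' * w k' i end.

Lemma lcf_ext : forall w t t' k i, (forall j, (j < k)%nat -> t j = t' j) -> lcf w t k i = lcf w t' k i.
Proof.
  intros w t t' k i; induction k; intros H; simpl; auto.
  rewrite IHk by (intros; apply H; lia). rewrite H by lia. reflexivity.
Qed.

Lemma G_lemma (w : nat -> nat -> R)
  (Hw : forall k, (k < n)%nat -> (forall i, (k < i)%nat -> w k i = 0) /\ w k k <> 0 /\ NN (w k) = 1 /\
       forall h, supp k h -> 1/2 <= NN (fun i => w k i - h i)) :
  forall k, (k <= n)%nat -> forall c, supp k c -> exists t,
    (forall i, c i = lcf w t k i) /\ forall j, (j < k)%nat -> Rabs (t j) <= 2 * 3 ^ k * NN c.
Proof.
  induction k; intros Hk c Hc.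
  - exists (fun _ => 0). split. intros i. simpl. apply Hc; lia. intros; lia.
  - destruct (Hw k) as [Hw1 [Hw2 [Hw3 Hw4]]]; [lia|].
    set (tk := c k / w k k).
    set (c' := fun i => c i - tk * w k i).
    assert (Hc' : supp k c').
    { intros i Hi. unfold c'. destruct (Nat.eq_dec i k).
      - subst. unfold tk. field. auto.
      - rewrite Hc, Hw1 by lia. ring. }
    destruct (IHk ltac:(lia) c' Hc') as [t' [Ht'1 Ht'2]].
    exists (fun j => if Nat.eq_dec j k then tk else t' j). split.
    + intros i. simpl. rewrite (lcf_ext w _ t').
      2:{ intros j Hj. destruct (Nat.eq_dec j k); [lia|auto]. }
      rewrite <- Ht'1. destruct (Nat.eq_dec k k); [|congruence]. unfold c'. ring.
    + pose proof (NN_ge0 c) as Hc0.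
      assert (Htk : Rabs tk <= 2 * NN c).
      { destruct (Req_dec tk 0) as [E|E].
        - rewrite E, Rabs_R0. lra.
        - assert (Hs : supp k (fun i => - c' i / tk)).
          { intros i Hi. rewrite Hc' by auto. field. auto. }
          pose proof (Hw4 _ Hs) as H4.
          rewrite (NN_ext c (fun i => tk * (w k i - - c' i / tk))) by (intros; unfold c'; field; auto).
          rewrite NN_scal. pose proof (Rabs_pos tk). nra. }
      assert (Hc'b : NN c' <= 3 * NN c).
      { rewrite (NN_ext c' (fun i => c i + (- tk) * w k i)) by (intros; unfold c'; ring).
        eapply Rle_trans. apply NN_tri. rewrite NN_scal, Hw3, Rabs_Ropp. lra. }
      assert (H3 : 1 <= 3 ^ k) by (apply pow_R1_Rle; lra).
      intros j Hj. destruct (Nat.eq_dec j k).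
      * simpl. nra.
      * eapply Rle_trans. apply Ht'2. lia. simpl.
        assert (0 <= 2 * 3 ^ k) by lra. nra.
Qed.


Lemma lcf_sub : forall w s s' k i, lcf w s k i - lcf w s' k i = lcf w (fun j => s j - s' j) k i.
Proof. intros w s s' k i; induction k; simpl. ring. rewrite <- IHk. ring. Qed.

Lemma NN_lcf_bound (w : nat -> nat -> R) : forall k, (forall j, (j < k)%nat -> NN (w j) = 1) ->
  forall s hb, (forall j, (j < k)%nat -> Rabs (s j) <= hb) -> NN (fun i => lcf w s k i) <= INR k * hb.
Proof.
  induction k; intros Hw s hb Hs.
  - simpl. rewrite (NN_ext _ (fun i => 0 * 0)) by (intros; ring). rewrite NN_scal, Rabs_R0. lra.
  - change (NN (fun i => lcf w s k i + s k * w k i) <= INR (S k) * hb).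
    eapply Rle_trans. apply NN_tri. rewrite NN_scal, Hw by lia.
    rewrite S_INR. pose proof (IHk ltac:(intros; apply Hw; lia) s hb ltac:(intros; apply Hs; lia)).
    pose proof (Hs k ltac:(lia)). change (NN (fun i => lcf w s k i)) with (NN (lcf w s k)) in H. lra.
Qed.

End NS2.


Lemma fchoice {A B : Type} (P : A -> B -> Prop) : (forall a, exists b, P a b) -> exists f, forall a, P a (f a).
Proof.
  intros H. exists (fun a => proj1_sig (constructive_indefinite_description _ (H a))).
  intros a. exact (proj2_sig (constructive_indefinite_description _ (H a))).
Qed.

Definition digit (A h r : R) : nat := Z.to_nat (Int_part ((r + A) / h)).

Lemma Int_part_nonneg : forall x, 0 <= x -> (0 <= Int_part x)%Z.
Proof.
  intros x Hx. destruct (base_Int_part x) as [H1 H2].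
  assert (-1 < IZR (Int_part x)) by lra. apply lt_IZR in H. lia.
Qed.

Lemma digit_lt : forall A h r, 0 < h -> Rabs r <= A -> (digit A h r < Z.to_nat (up (2 * A / h)))%nat.
Proof.
  intros A h r Hh Hr. unfold digit.
  assert (Hr' : - A <= r <= A) by (unfold Rabs in Hr; destruct (Rcase_abs r); lra).
  assert (H0 : 0 <= (r + A) / h) by (apply Rmult_le_pos; [lra| left; apply Rinv_0_lt_compat; lra]).
  assert (H1 : (r + A) / h <= 2 * A / h) by (apply Rmult_le_compat_r; [left; apply Rinv_0_lt_compat; lra| lra]).
  pose proof (Int_part_nonneg _ H0).
  destruct (base_Int_part ((r + A) / h)) as [H2 _].
  destruct (archimed (2 * A / h)) as [H3 _].
  assert (IZR (Int_part ((r + A) / h)) < IZR (up (2 * A / h))) by lra.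
  apply lt_IZR in H4. apply Z2Nat.inj_lt; lia.
Qed.

Lemma digit_eq : forall A h r r', 0 < h -> Rabs r <= A -> Rabs r' <= A ->
  digit A h r = digit A h r' -> Rabs (r - r') < h.
Proof.
  intros A h r r' Hh Hr Hr' Heq. unfold digit in Heq.
  assert (Hra : - A <= r <= A) by (unfold Rabs in Hr; destruct (Rcase_abs r); lra).
  assert (Hra' : - A <= r' <= A) by (unfold Rabs in Hr'; destruct (Rcase_abs r'); lra).
  assert (H0 : 0 <= (r + A) / h) by (apply Rmult_le_pos; [lra| left; apply Rinv_0_lt_compat; lra]).
  assert (H0' : 0 <= (r' + A) / h) by (apply Rmult_le_pos; [lra| left; apply Rinv_0_lt_compat; lra]).
  apply Z2Nat.inj in Heq; try (apply Int_part_nonneg; auto).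
  destruct (base_Int_part ((r + A) / h)) as [H1 H2].
  destruct (base_Int_part ((r' + A) / h)) as [H3 H4].
  rewrite Heq in H1, H2.
  assert (Habs : Rabs ((r + A) / h - (r' + A) / h) < 1).
  { apply Rabs_def1; lra. }
  replace ((r + A) / h - (r' + A) / h) with ((r - r') / h) in Habs by (field; lra).
  unfold Rdiv in Habs. rewrite Rabs_mult, (Rabs_right (/ h)) in Habs by (left; apply Rinv_0_lt_compat; lra).
  apply (Rmult_lt_compat_r h) in Habs; auto. rewrite Rmult_assoc, Rinv_l, Rmult_1_r, Rmult_1_l in Habs by lra.
  exact Habs.
Qed.

Fixpoint allvec (n W : nat) : list (list nat) :=
  match n with
  | O => [nil]
  | S n' => flat_map (fun d => map (cons d) (allvec n' W)) (seq 0 W)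
  end.

Lemma flat_map_len {X Y : Type} (f : X -> list Y) m : forall l, (forall x, length (f x) = m) ->
  length (flat_map f l) = (length l * m)%nat.
Proof. induction l; intros H; simpl; auto. rewrite length_app, H, IHl; auto. Qed.

Lemma allvec_len : forall n W, length (allvec n W) = (W ^ n)%nat.
Proof.
  induction n; intros W; simpl; auto.
  rewrite (flat_map_len _ (W ^ n)%nat). rewrite length_seq. lia.
  intros x. rewrite length_map. auto.
Qed.

Lemma allvec_in : forall n W l, length l = n -> (forall x, In x l -> (x < W)%nat) -> In l (allvec n W).
Proof.
  induction n; intros W l Hl Hx.
  - destruct l; simpl in *; [auto|lia].
  - destruct l as [|x l]; simpl in Hl; [lia|]. simpl. apply in_flat_map.
    exists x. split. apply in_seq. assert (x < W)%nat by (apply Hx; left; auto). lia.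
    apply in_map. apply IHn. lia. intros y Hy. apply Hx. right; auto.
Qed.

Lemma map_seq_eq {Y : Type} (f f' : nat -> Y) : forall n s, map f (seq s n) = map f' (seq s n) ->
  forall m, (s <= m < s + n)%nat -> f m = f' m.
Proof.
  induction n; intros s H m Hm; [lia|]. simpl in H. injection H as H1 H2.
  destruct (Nat.eq_dec m s). subst; auto. apply (IHn (S s)); auto. lia.
Qed.


Lemma exp_le_inc : forall x y, x <= y -> exp x <= exp y.
Proof. intros x y [H|H]. left; apply exp_increasing; auto. subst; lra. Qed.

Lemma ln_le_sub1 : forall y, 0 < y -> ln y <= y - 1.
Proof. intros y Hy. pose proof (exp_ineq1_le (ln y)). rewrite exp_ln in H; auto. lra. Qed.

Lemma rpow_conc : forall x a, 0 < x -> 0 < a < 1 -> Rpower x a <= 1 + a * (x - 1).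
Proof.
  intros x a Hx Ha.
  set (m := 1 + a * (x - 1)).
  assert (Hm : 0 < m) by (unfold m; nra).
  assert (H1 := ln_le_sub1 (x / m) ltac:(apply Rdiv_lt_0_compat; lra)).
  assert (H2 := ln_le_sub1 (/ m) ltac:(apply Rinv_0_lt_compat; lra)).
  rewrite ln_Rinv in H2 by lra. unfold Rdiv in H1. rewrite ln_mult, ln_Rinv in H1 by (try apply Rinv_0_lt_compat; lra).
  assert (a * (ln x - ln m) + (1 - a) * (- ln m) <= a * (x * / m - 1) + (1 - a) * (/ m - 1)) by nra.
  assert (a * (x * / m - 1) + (1 - a) * (/ m - 1) = 0).
  { unfold m. field. unfold m in Hm. lra. }
  assert (a * ln x <= ln m) by lra.
  unfold Rpower. rewrite <- (exp_ln m) by lra. apply exp_le_inc. lra.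
Qed.

Lemma rpow_ge_self : forall r a, 0 < r <= 1 -> 0 < a < 1 -> r <= Rpower r a.
Proof.
  intros r a Hr Ha. unfold Rpower. rewrite <- (exp_ln r) at 1 by lra. apply exp_le_inc.
  assert (ln r <= 0). { destruct (Req_dec r 1). subst. rewrite ln_1. lra. left. rewrite <- ln_1. apply ln_increasing; lra. }
  nra.
Qed.

Lemma snow_half : forall a A B C eps, 0 < a < 1 -> 0 < B <= A -> 0 < C <= A + B -> 0 <= eps -> a < 1 - eps ->
  Rpower A a + Rpower B a <= Rpower C a + Rpower B a * eps -> False.
Proof.
  intros al A B C eps Ha HB HC He Hae H.
  set (r := B / A).
  assert (Hr : 0 < r <= 1).
  { unfold r. split. apply Rdiv_lt_0_compat; lra. apply (Rmult_le_reg_l A). lra. field_simplify; lra. }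
  assert (HAB : A + B = A * (1 + r)) by (unfold r; field; lra).
  assert (HBr : B = A * r) by (unfold r; field; lra).
  assert (Hc : Rpower C al <= Rpower A al * Rpower (1 + r) al).
  { rewrite Rpower_mult_distr by lra. rewrite <- HAB. destruct (Req_dec C (A + B)).
    rewrite H0; lra. left. apply Rlt_Rpower_l; lra. }
  rewrite HBr, <- Rpower_mult_distr in H by lra.
  pose proof (rpow_conc (1 + r) al ltac:(lra) Ha).
  pose proof (rpow_ge_self r al Hr Ha).
  assert (HA : 0 < Rpower A al) by (unfold Rpower; apply exp_pos).
  assert (Hra : 0 < Rpower r al) by (unfold Rpower; apply exp_pos).
  assert (Rpower A al * Rpower (1 + r) al <= Rpower A al * (1 + al * Rpower r al)).
  { apply Rmult_le_compat_l. lra. nra. }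
  assert (Rpower A al * Rpower r al * (1 - al - eps) > 0).
  { apply Rmult_gt_0_compat. nra. lra. }
  nra.
Qed.

Lemma snow_ineq : forall a A B C eps, 0 < a < 1 -> 0 < A -> 0 < B -> 0 < C <= A + B -> 0 <= eps -> a < 1 - eps ->
  Rpower A a + Rpower B a <= Rpower C a + Rpower B a * eps ->
  Rpower A a + Rpower B a <= Rpower C a + Rpower A a * eps -> False.
Proof.
  intros. destruct (Rle_dec B A).
  - eapply snow_half with (A := A) (B := B); eauto; lra.
  - eapply snow_half with (A := B) (B := A) (C := C); eauto; lra.
Qed.


Theorem theorem1p1 :
  forall (n : nat) (alpha : R), 0 < alpha < 1 ->
  exists N : nat,
    forall (X : Type) (d : X -> X -> R),
      is_metric X d -> card_ge X N ->
      forall (V : Type) (add : V -> V -> V) (scal : R -> V -> V) (zero : V)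
             (opp : V -> V) (norm : V -> R),
        is_normed_space V add scal zero opp norm ->
        has_dim V add scal zero n ->
        ~ (exists f : X -> V,
             isometric_embedding X V (snowflake X d alpha) add opp norm f).
Proof.
  intros n al Hal.
  set (h := (1 - al) / (INR n + 1)). set (A := 2 * 3 ^ n).
  set (W := Z.to_nat (up (2 * A / h))).
  exists (2 ^ (W ^ n) + 1)%nat.
  intros X d Hd Hcard V add scal zero opp norm HN Hdim [F HF].
  destruct Hdim as [e [Hspan Hind]].
  destruct Hcard as [g Hg].
  assert (Hn1 : 0 < INR n + 1) by (pose proof (pos_INR n); lra).
  assert (Hh : 0 < h) by (unfold h; apply Rdiv_lt_0_compat; lra).
  assert (Hnh : INR n * h < 1 - al).
  { unfold h. apply (Rmult_lt_reg_r (INR n + 1)); auto.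
    replace (INR n * ((1 - al) / (INR n + 1)) * (INR n + 1)) with (INR n * (1 - al)) by (field; lra).
    nra. }
  set (NNf := NN add scal zero norm n e).
  destruct (fchoice (fun k w => (k < n)%nat -> (forall i, (k < i)%nat -> w i = 0) /\ w k <> 0 /\ NNf w = 1 /\
       forall hh, supp k hh -> 1/2 <= NNf (fun i => w i - hh i))) as [om Hom].
  { intros k. destruct (lt_dec k n) as [l|l].
    - destruct (omega_exists add scal zero opp norm HN n e Hind k l) as [w Hw]. exists w; auto.
    - exists (fun _ => 0). intros; lia. }
  destruct (fchoice (fun c t => (forall i, (i < n)%nat -> c i = lcf om t n i) /\
       forall j, (j < n)%nat -> Rabs (t j) <= A * NNf c)) as [T HT].
  { intros c. set (cr := fun i => if lt_dec i n then c i else 0).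
    assert (Hs : supp n cr). { intros i Hi. unfold cr. destruct (lt_dec i n); [lia|auto]. }
    destruct (G_lemma add scal zero opp norm HN n e om Hom n (le_n n) cr Hs) as [t [Ht1 Ht2]].
    exists t. split.
    - intros i Hi. rewrite <- Ht1. unfold cr. destruct (lt_dec i n); [auto|lia].
    - intros j Hj. unfold A, NNf. rewrite (NN_ext add scal zero norm n e c cr).
      apply Ht2; auto. intros i Hi. unfold cr. destruct (lt_dec i n); [auto|lia]. }
  destruct (fchoice (fun v c => v = lin_comb V add scal zero e c n) Hspan) as [pi Hpi].
  set (Q := fun i => pi (F (g i))).
  assert (HD : forall i j, NNf (fun m => Q j m - Q i m) = snowflake X d al (g j) (g i)).
  { intros. unfold NNf, NN. rewrite (LC_sub add scal zero opp norm HN). unfold Q. rewrite <- !Hpi. apply HF. }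
  set (N := (2 ^ (W ^ n) + 1)%nat) in *.
  destruct Hd as [Hd0 [Hdeq [Hdsym Hdtri]]].
  assert (Hdpos : forall i j, (i < N)%nat -> (j < N)%nat -> i <> j -> 0 < d (g j) (g i)).
  { intros i j Hi Hj Hij. destruct (Hd0 (g j) (g i)) as [Hp|Hp]; auto. exfalso.
    apply Hij. symmetry. apply Hg; auto. apply Hdeq. auto. }
  assert (Hsnow : forall i j, (i < N)%nat -> (j < N)%nat -> i <> j ->
     NNf (fun m => Q j m - Q i m) = Rpower (d (g j) (g i)) al).
  { intros i j Hi Hj Hij. rewrite HD. unfold snowflake, rpow_nn.
    destruct (Rle_dec (d (g j) (g i)) 0); auto. pose proof (Hdpos i j Hi Hj Hij). lra. }
  assert (HDpos : forall i j, (i < N)%nat -> (j < N)%nat -> i <> j -> 0 < NNf (fun m => Q j m - Q i m)).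
  { intros. rewrite Hsnow; auto. unfold Rpower. apply exp_pos. }
  set (u := fun i j m => / NNf (fun m => Q j m - Q i m) * (Q j m - Q i m)).
  assert (Hu1 : forall i j, (i < N)%nat -> (j < N)%nat -> i <> j -> NNf (u i j) = 1).
  { intros i j Hi Hj Hij. unfold u, NNf. rewrite (NN_scal add scal zero opp norm HN). fold NNf.
    pose proof (HDpos i j Hi Hj Hij). rewrite Rabs_right by (left; apply Rinv_0_lt_compat; lra).
    field. lra. }
  assert (HTb : forall i j, (i < N)%nat -> (j < N)%nat -> i <> j -> forall m, (m < n)%nat -> Rabs (T (u i j) m) <= A).
  { intros i j Hi Hj Hij m Hm. destruct (HT (u i j)) as [_ H2]. eapply Rle_trans. apply H2; auto. rewrite Hu1; auto. lra. }
  set (col := fun i j => map (fun m => digit A h (T (u i j) m)) (seq 0 n)).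
  destruct (tourn col (allvec n W) (seq 0 N)) as [i [j [k [Hi [Hj [Hk [Hij [Hjk Hc]]]]]]]].
  - apply seq_NoDup.
  - intros i j Hi Hj Hij. apply in_seq in Hi, Hj. apply allvec_in.
    + unfold col. rewrite length_map, length_seq. auto.
    + intros x Hx. unfold col in Hx. apply in_map_iff in Hx. destruct Hx as [m [<- Hm]].
      apply in_seq in Hm. apply digit_lt; auto. apply HTb; lia.
  - rewrite allvec_len, length_seq. unfold N. lia.
  - apply in_seq in Hi, Hj, Hk.
    assert (Hi' : (i < N)%nat) by lia. assert (Hj' : (j < N)%nat) by lia. assert (Hk' : (k < N)%nat) by lia.
    clear Hi Hj Hk.
    set (eps := NNf (fun m => u i j m - u j k m)).
    assert (Heps0 : 0 <= eps) by (apply (NN_ge0 add scal zero opp norm HN)).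
    assert (Heps : eps <= INR n * h).
    { unfold eps. rewrite (NN_ext add scal zero norm n e _ (fun m => lcf om (fun l => T (u i j) l - T (u j k) l) n m)).
      - apply (NN_lcf_bound add scal zero opp norm HN n e om n).
        + intros l Hl. apply (Hom l Hl).
        + intros l Hl. left. apply (digit_eq A h); auto. apply HTb; lia. apply HTb; lia.
          apply (map_seq_eq _ _ n 0 Hc). lia.
      - intros m Hm. rewrite <- lcf_sub. destruct (HT (u i j)) as [H1 _]. destruct (HT (u j k)) as [H2 _].
        rewrite <- H1, <- H2 by auto. reflexivity. }
    set (a := NNf (fun m => Q j m - Q i m)) in *.
    set (b := NNf (fun m => Q k m - Q j m)) in *.
    set (c := NNf (fun m => Q k m - Q i m)) in *.
    assert (Ha : 0 < a) by (apply HDpos; auto; lia).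
    assert (Hb : 0 < b) by (apply HDpos; auto; lia).
    assert (Hk1 : a + b <= c + b * eps).
    { assert (a + b = NNf (fun m => (a + b) * u i j m)).
      { unfold NNf. rewrite (NN_scal add scal zero opp norm HN). fold NNf. rewrite Hu1 by (auto; lia). rewrite Rabs_right; lra. }
      rewrite H. unfold NNf.
      rewrite (NN_ext add scal zero norm n e _ (fun m => (Q k m - Q i m) + b * (u i j m - u j k m))).
      - eapply Rle_trans. apply (NN_tri add scal zero opp norm HN). rewrite (NN_scal add scal zero opp norm HN). rewrite Rabs_right by lra. fold NNf. unfold c, eps. lra.
      - intros m _. unfold u. fold a b. field. lra. }
    assert (Hk2 : a + b <= c + a * eps).
    { assert (a + b = NNf (fun m => (a + b) * u j k m)).
      { unfold NNf. rewrite (NN_scal add scal zero opp norm HN). fold NNf. rewrite Hu1 by (auto; lia). rewrite Rabs_right; lra. }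
      rewrite H. unfold NNf.
      rewrite (NN_ext add scal zero norm n e _ (fun m => (Q k m - Q i m) + a * (u j k m - u i j m))).
      - eapply Rle_trans. apply (NN_tri add scal zero opp norm HN). rewrite (NN_scal add scal zero opp norm HN). rewrite Rabs_right by lra.
        rewrite (NN_sub_sym add scal zero opp norm HN n e (u j k) (u i j)). fold NNf. unfold c, eps. lra.
      - intros m _. unfold u. fold a b. field. lra. }
    unfold a, b, c in Hk1, Hk2. rewrite !Hsnow in Hk1, Hk2 by (auto; lia).
    apply (snow_ineq al (d (g j) (g i)) (d (g k) (g j)) (d (g k) (g i)) eps); auto.
    + apply Hdpos; auto; lia.
    + apply Hdpos; auto; lia.
    + split. apply Hdpos; auto; lia. pose proof (Hdtri (g k) (g j) (g i)). lra.
    + lra.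
Qed.
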